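(* Let $H$ be either $\mathrm{Sym}(m)$ acting on the set $\Delta$ of $k$-element subsets of $\{1,\ldots,m\}$, where $m\ge 5$ and $1\le k<m/2$, or $\mathrm{P\Gamma L}_d(q)$ acting on the set $\Delta$ of points of the projective space $\mathrm{PG}_{d-1}(q)$, where $d\ge 2$ and $q\ge 4$ is a prime power; let $r=|\Delta|$. Let $\ell\geq 2$ and let $H^\ell$ act coordinatewise on $\Omega=\Delta^\ell$. Suppose $g=(h_1,\ldots,h_\ell)\in H^\ell$ has at most four cycles on $\Omega$. Then, after relabelling the index set $\{1,\ldots,\ell\}$ if necessary, one of the following holds: (i) $\ell=2$, and $h_1$, $h_2$ each have exactly two cycles on $\Delta$, of lengths $t_1,r-t_1$ and $t_2,r-t_2$ respectively, and each of $t_1,r-t_1$ is relatively prime to each of $t_2,r-t_2$; (ii) $\ell=2$, $h_1$ is a single cycle of length $r$ on $\Delta$, $h_2$ has exactly two cycles on $\Delta$, of lengths $t_2,r-t_2$, and $\gcd(r,t_2)\leq 2$; (iii) $\ell=2$, $h_1$ is a single cycle of length $r$ on $\Delta$, $h_2$ has exactly three cycles on $\Delta$, of lengths $t_2,t_2',r-(t_2+t_2')$, and $\gcd(r,t_2)+\gcd(r,t_2')+\gcd(r,t_2+t_2')\leq 4$; (iv) $\ell=3$, $h_1$ is a single cycle of length $r$ on $\Delta$, $h_2$ has exactly two cycles on $\Delta$, of lengths $t_2,r-t_2$, $h_3$ has exactly two cycles on $\Delta$, of lengths $t_3,r-t_3$, and the integers $r,t_2,r-t_2,t_3,r-t_3$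 are pairwise relatively prime; (v) $\ell=2$, $h_1$ is a single cycle of length $r$ on $\Delta$, $h_2$ has exactly four cycles on $\Delta$, of lengths $t_2,t_2',t_2'',r-(t_2+t_2'+t_2'')$, and $\gcd(r,t_2)=\gcd(r,t_2')=\gcd(r,t_2'')=\gcd(r,t_2+t_2'+t_2'')=1$.
   Context: The number of cycles of a permutation is the number of orbits of the cyclic group it generates, fixed points included. The element $(h_1,\ldots,h_\ell)$ acts on $\Omega=\Delta^\ell$ by $(\delta_1,\ldots,\delta_\ell)\mapsto(\delta_1^{h_1},\ldots,\delta_\ell^{h_\ell})$. *)

(* Defs.v *)
From HB Require Import structures.
From mathcomp Require Import all_boot all_order all_algebra all_fingroup.
Set Implicit Arguments. Unset Strict Implicit. Unset Printing Implicit Defensive.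
Import GRing.Theory.

(* The multiset of cycle lengths of s (one entry per cycle, fixed points included). *)
Definition cyc_lens (T : finType) (s : {perm T}) : seq nat :=
  [seq #|pred_of_set C| | C <- enum (porbits s)].

Definition ncycles (T : finType) (s : {perm T}) : nat := #|porbits s|.

(* Coordinatewise action of (h_1,...,h_l) on Omega = Delta^l = {ffun 'I_l -> Delta}. *)
Definition prod_fun (l : nat) (T : finType) (h : 'I_l -> {perm T})
  (f : {ffun 'I_l -> T}) : {ffun 'I_l -> T} := [ffun i => h i (f i)].

Lemma prod_fun_inj (l : nat) (T : finType) (h : 'I_l -> {perm T}) :
  injective (prod_fun h).
Proof.
move=> f g /ffunP E; apply/ffunP => i; have := E i; rewrite !ffunE.
exact: perm_inj.
Qed.

Definition prod_perm (l : nat) (T : finType) (h : 'I_l -> {perm T})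
  : {perm {ffun 'I_l -> T}} := perm (@prod_fun_inj l T h).

Definition prop53_conclusion (T : finType) (l : nat) (h : 'I_l -> {perm T}) : Prop :=
  let r := #|T| in
  (
      (l = 2 /\ exists i j : 'I_l, i != j /\ exists t1 t2 : nat,
        [/\ perm_eq (cyc_lens (h i)) [:: t1; r - t1],
            perm_eq (cyc_lens (h j)) [:: t2; r - t2],
            coprime t1 t2 /\ coprime t1 (r - t2)
          & coprime (r - t1) t2 /\ coprime (r - t1) (r - t2)]) \/
      (l = 2 /\ exists i j : 'I_l, i != j /\ exists t2 : nat,
        [/\ cyc_lens (h i) = [:: r],
            perm_eq (cyc_lens (h j)) [:: t2; r - t2]
          & gcdn r t2 <= 2]) \/
      (l = 2 /\ exists i j : 'I_l, i != j /\ exists t2 t2' : nat,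
        [/\ cyc_lens (h i) = [:: r],
            perm_eq (cyc_lens (h j)) [:: t2; t2'; r - (t2 + t2')]
          & gcdn r t2 + gcdn r t2' + gcdn r (t2 + t2') <= 4]) \/
      (l = 3 /\ exists i j k : 'I_l, [/\ i != j, j != k & i != k] /\ exists t2 t3 : nat,
        [/\ cyc_lens (h i) = [:: r],
            perm_eq (cyc_lens (h j)) [:: t2; r - t2],
            perm_eq (cyc_lens (h k)) [:: t3; r - t3]
          & pairwise coprime [:: r; t2; r - t2; t3; r - t3]]) \/
      (l = 2 /\ exists i j : 'I_l, i != j /\ exists t2 t2' t2'' : nat,
        [/\ cyc_lens (h i) = [:: r],
            perm_eq (cyc_lens (h j)) [:: t2; t2'; t2''; r - (t2 + t2' + t2'')]
          & [/\ gcdn r t2 = 1, gcdn r t2' = 1, gcdn r t2'' = 1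
              & gcdn r (t2 + t2' + t2'') = 1]])).

Definition ksubset (m k : nat) : finType := {A : {set 'I_m} | #|A| == k}.

Definition in_Sym_ksub (m k : nat) (p : {perm ksubset m k}) : Prop :=
  exists s : {perm 'I_m}, forall A : ksubset m k, sval (p A) = s @: sval A.

Definition is_point (F : finFieldType) (d : nat) (S : {set 'rV[F]_d}) : bool :=
  [exists v : 'rV[F]_d, (v != 0%R) && (S == [set a *: v | a : F]%R)].

Definition pg_point (F : finFieldType) (d : nat) : finType :=
  {S : {set 'rV[F]_d} | is_point S}.

(* p is the permutation of points induced by a semilinear bijection
   v |-> v^sigma A, with A invertible and sigma a field automorphism of F
   (every ring endomorphism of a finite field is an automorphism). *)
Definition in_PGammaL (F : finFieldType) (d : nat) (p : {perm pg_point F d}) : Prop :=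
  exists (A : 'M[F]_d) (s : {rmorphism F -> F}),
    A \in unitmx /\
    forall S : pg_point F d, sval (p S) = [set (map_mx s v *m A)%R | v in sval S].

(* Main.v *)
Require Import Defs.
From HB Require Import structures.
From mathcomp Require Import all_boot all_order all_algebra all_fingroup.
From mathcomp Require Import zify.
From mathcomp Require Import zify.
Set Implicit Arguments. Unset Strict Implicit. Unset Printing Implicit Defensive.
Import GRing.Theory.
Local Open Scope group_scope.
Local Open Scope nat_scope.
Lemma prod_permE l (T : finType) (h : 'I_l -> {perm T}) f :
  prod_perm h f = [ffun i => h i (f i)].
Proof. by rewrite /prod_perm permE. Qed.

Lemma prod_permX l (T : finType) (h : 'I_l -> {perm T}) n f :
  (prod_perm h ^+ n) f = [ffun i => (h i ^+ n) (f i)].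
Proof.
elim: n f => [|n IH] f.
  by apply/ffunP => i; rewrite !ffunE !expg0 !perm1.
rewrite expgSr permM IH prod_permE; apply/ffunP => i; rewrite !ffunE.
by rewrite expgSr permM.
Qed.

Lemma inv_count (X Y : finType) (g : {perm X}) (phi : X -> Y) :
  (forall x, phi (g x) = phi x) -> #|phi @: [set: X]| <= #|porbits g|.
Proof.
move=> inv.
have invX : forall n x, phi ((g ^+ n) x) = phi x.
  elim=> [|n IH] x; first by rewrite expg0 perm1.
  by rewrite expgSr permM inv IH.
case: (pickP (@predT X)) => [x0 _|e]; last first.
  suff -> : phi @: [set: X] = set0 by rewrite cards0.
  apply/setP => y; rewrite inE; by apply/imsetP => -[x]; have := e x.
pose rep (O : {set X}) := odflt x0 [pick y in O].
apply: (leq_trans _ (leq_imset_card (fun O => phi (rep O)) _)).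
apply: subset_leq_card; apply/subsetP => _ /imsetP[x _ ->].
apply/imsetP; exists (porbit g x); first by apply: imset_f.
rewrite /rep; case: pickP => [y Hy|e]; last by have := e x; rewrite porbit_id.
by case/porbitP: Hy => n ->; rewrite invX.
Qed.

Lemma expg_fix (X : finType) (g : {perm X}) L x q :
  (g ^+ L) x = x -> (g ^+ (q * L)) x = x.
Proof.
move=> H; elim: q => [|q IH]; first by rewrite mul0n expg0 perm1.
by rewrite mulSn expgD permM H IH.
Qed.

Lemma porbit_small (X : finType) (g : {perm X}) L x :
  0 < L -> (g ^+ L) x = x -> #|porbit g x| <= L.
Proof.
move=> L0 H.
have -> : L = #|'I_L| by rewrite card_ord.
apply: (leq_trans _ (leq_imset_card (fun i : 'I_L => (g ^+ i) x) _)).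
apply: subset_leq_card; apply/subsetP => y /porbitP[n ->].
apply/imsetP; exists (Ordinal (ltn_pmod n L0)) => //=.
by rewrite {1}(divn_eq n L) expgD permM expg_fix.
Qed.

Lemma orbits_in_bound (X : finType) (g : {perm X}) (S : {set X}) L :
  0 < L -> (forall x, x \in S -> (g ^+ L) x = x) ->
  #|S| <= #|[set porbit g x | x in S]| * L.
Proof.
move=> L0 H.
apply: (@leq_trans #|cover [set porbit g x | x in S]|).
  apply: subset_leq_card; apply/subsetP => x xS.
  by apply/bigcupP; exists (porbit g x); [apply: imset_f | apply: porbit_id].
apply: (leq_trans (leq_card_cover _)).
rewrite -sum_nat_const; apply: leq_sum => _ /imsetP[x xS ->].
exact: porbit_small (H x xS).
Qed.

Lemma porbit_sub (X : finType) (g : {perm X}) (S : {set X}) x :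
  (forall y, y \in S -> g y \in S) -> x \in S -> porbit g x \subset S.
Proof.
move=> inv xS; apply/subsetP => y /porbitP[n ->].
elim: n => [|n IH]; first by rewrite expg0 perm1.
by rewrite expgSr permM inv.
Qed.

Lemma orbits_sum (X : finType) (g : {perm X}) (s : seq {set X}) :
  (forall S, S \in s -> forall x, x \in S -> g x \in S) ->
  pairwise (fun A B : {set X} => [disjoint A & B]) s ->
  \sum_(S <- s) #|[set porbit g x | x in S]| <= #|porbits g|.
Proof.
move=> inv pw.
suff: \sum_(S <- s) #|[set porbit g x | x in S]| =
      #|\bigcup_(S <- s) [set porbit g x | x in S]|.
  move=> ->; rewrite bigcup_seq; apply: subset_leq_card; apply/subsetP => O /bigcupP[S _].
  by case/imsetP => x _ ->; apply: imset_f.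
elim: s inv pw => [|S s IH] inv pw; first by rewrite !big_nil cards0.
rewrite !big_cons /=; case/andP: pw => allS pws.
rewrite IH //; last by move=> S' S's; apply: inv; rewrite inE S's orbT.
rewrite cardsU; suff ->: [set porbit g x | x in S] :&:
   \bigcup_(j <- s) [set porbit g x | x in j] = set0 by rewrite cards0 subn0.
apply/setP => O; rewrite bigcup_seq !inE; apply/negP => /andP[/imsetP[x xS ->]].
case/bigcupP => S' S's /imsetP[y yS' /eqP].
rewrite eq_sym eq_porbit_mem => yx.
have invS : forall z, z \in S -> g z \in S by apply: inv; rewrite inE eqxx.
have yS := subsetP (porbit_sub invS xS) _ yx.
have := allP allS S' S's; rewrite disjoint_subset => /subsetP/(_ _ yS).
by rewrite inE yS'.
Qed.

Definition famS l (T : finType) (F : 'I_l -> {set T}) : {set {ffun 'I_l -> T}} :=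
  [set x : {ffun 'I_l -> T} | [forall i, x i \in F i]].

Lemma card_famS l (T : finType) (F : 'I_l -> {set T}) :
  #|famS F| = \prod_i #|F i|.
Proof.
have -> : famS F = [set x in family (fun i => mem (F i))].
  by apply/setP => x; rewrite !inE.
rewrite cardsE card_family.
rewrite /image_mem foldr_map.
transitivity (\prod_(i <- enum 'I_l) #|F i|).
  by elim: (enum _) => [|a s IH]; rewrite ?big_nil ?big_cons //= IH.
exact: big_enum.
Qed.

Lemma porbit_mem_eq (T : finType) (s : {perm T}) (C : {set T}) y :
  C \in porbits s -> y \in C -> C = porbit s y.
Proof.
by case/imsetP => z _ -> yz; apply/eqP; rewrite eq_sym eq_porbit_mem.
Qed.

Lemma famS_inv l (T : finType) (h : 'I_l -> {perm T}) (F : 'I_l -> {set T}) :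
  (forall i, F i \in porbits (h i)) ->
  forall x, x \in famS F -> prod_perm h x \in famS F.
Proof.
move=> HF x; rewrite !inE => /forallP Hx; apply/forallP => i.
rewrite prod_permE ffunE (porbit_mem_eq (HF i) (Hx i)).
by rewrite -[h i (x i)]/(aperm (x i) (h i)) -(expg1 (h i)) mem_porbit.
Qed.

Lemma famS_bound l (T : finType) (h : 'I_l -> {perm T}) (F : 'I_l -> {set T}) L :
  (forall i, F i \in porbits (h i)) -> 0 < L -> (forall i, #|F i| %| L) ->
  \prod_i #|F i| <= #|[set porbit (prod_perm h) x | x in famS F]| * L.
Proof.
move=> HF L0 HL; rewrite -card_famS; apply: orbits_in_bound => // x.
rewrite inE => /forallP Hx; rewrite prod_permX; apply/ffunP => i; rewrite ffunE.
have := HL i; rewrite (porbit_mem_eq (HF i) (Hx i)) => /dvdnP[q ->].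
by rewrite expg_fix // permX iter_porbit.
Qed.

Lemma porbits_disj (T : finType) (s : {perm T}) (A B : {set T}) :
  A \in porbits s -> B \in porbits s -> A != B -> [disjoint A & B].
Proof.
move=> HA HB nAB; rewrite -setI_eq0; apply/eqP/setP => z; rewrite !inE.
apply/negP => /andP[zA zB]; case/negP: nAB.
by rewrite (porbit_mem_eq HA zA) (porbit_mem_eq HB zB).
Qed.

Lemma porbits_sum (T : finType) (s : {perm T}) :
  \sum_(C <- enum (porbits s)) #|C| = #|T|.
Proof.
rewrite big_enum /=.
have cov : cover (porbits s) = [set: T].
  apply/setP => x; rewrite inE; apply/bigcupP; exists (porbit s x).
    exact: imset_f.
  exact: porbit_id.
have triv : trivIset (porbits s).
  by apply/trivIsetP => A B; apply: porbits_disj.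
have [_] := leq_card_cover (porbits s); rewrite cov cardsT triv.
by move/eqP.
Qed.

Lemma porbits_gt0 (T : finType) (s : {perm T}) C : C \in porbits s -> 0 < #|C|.
Proof. by case/imsetP => x _ ->; rewrite lt0n card_porbit_neq0. Qed.



Lemma porbits_setT (T : finType) (s : {perm T}) :
  #|porbits s| = 1 -> enum (porbits s) = [:: [set: T]].
Proof.
move=> H1; have := porbits_sum s.
have : size (enum (porbits s)) = 1 by rewrite -cardE.
case E: (enum (porbits s)) => [|A [|]] //= _.
rewrite big_cons big_nil addn0 => HA; congr [:: _].
apply/eqP; rewrite eqEcard subsetT cardsT HA leqnn; done.
Qed.

Lemma famS_gcd l (T : finType) (h : 'I_l -> {perm T}) (F : 'I_l -> {set T}) i j :
  i != j -> (forall k, F k \in porbits (h k)) ->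
  gcdn #|F i| #|F j| <= #|[set porbit (prod_perm h) x | x in famS F]|.
Proof.
move=> nij HF.
have pos k : 0 < #|F k| by apply: porbits_gt0 (HF k).
pose P := \prod_(k | (k != i) && (k != j)) #|F k|.
have P0 : 0 < P by rewrite prodn_gt0.
pose L := lcmn #|F i| #|F j| * P.
have L0 : 0 < L by rewrite muln_gt0 lcmn_gt0 !pos P0.
have HL : forall k, #|F k| %| L.
  move=> k; case: (eqVneq k i) => [->|ki].
    by apply: dvdn_mulr; apply: dvdn_lcml.
  case: (eqVneq k j) => [->|kj].
    by apply: dvdn_mulr; apply: dvdn_lcmr.
  by apply: dvdn_mull; rewrite /P (bigD1 k) ?ki ?kj //= dvdn_mulr.
have := famS_bound HF L0 HL.
have -> : \prod_k #|F k| = #|F i| * #|F j| * P.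
  rewrite (bigD1 i) //= (bigD1 j) /=; last by rewrite eq_sym.
  rewrite mulnA /P; congr (_ * _ * _); apply: eq_bigl => k; by rewrite andbC.
rewrite -(muln_lcm_gcd #|F i| #|F j|) /L mulnA leq_mul2r (negbTE (lt0n_neq0 P0)) /=.
by rewrite mulnC leq_mul2r -[lcmn _ _ == 0]negbK -lt0n lcmn_gt0 !pos.
Qed.

Lemma porbit_step (T : finType) (s : {perm T}) x : porbit s (s x) = porbit s x.
Proof. by have := porbit_perm s 1 x; rewrite expg1. Qed.

Lemma proj3 l (T : finType) (h : 'I_l -> {perm T}) i j k :
  i != j -> j != k -> i != k ->
  #|porbits (h i)| * #|porbits (h j)| * #|porbits (h k)| <= #|porbits (prod_perm h)|.
Proof.
move=> nij njk nik.
pose phi (x : {ffun 'I_l -> T}) :=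
  (porbit (h i) (x i), porbit (h j) (x j), porbit (h k) (x k)).
have inv : forall x, phi (prod_perm h x) = phi x.
  by move=> x; rewrite /phi prod_permE !ffunE !porbit_step.
apply: leq_trans (inv_count inv).
rewrite -!cardsX; apply: subset_leq_card; apply/subsetP => [[[A B] C]].
rewrite !inE /= => /andP[/andP[/imsetP[a _ ->] /imsetP[b _ ->]] /imsetP[c _ ->]].
apply/imsetP; exists [ffun m => if m == i then a else if m == j then b else c] => //.
by rewrite inE.
rewrite /phi !ffunE eqxx eq_sym (negbTE nij) eqxx eq_sym (negbTE nik).
by rewrite eq_sym (negbTE njk).
Qed.

Lemma proj2 l (T : finType) (h : 'I_l -> {perm T}) i j :
  i != j -> #|porbits (h i)| * #|porbits (h j)| <= #|porbits (prod_perm h)|.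
Proof.
move=> nij.
pose phi (x : {ffun 'I_l -> T}) := (porbit (h i) (x i), porbit (h j) (x j)).
have inv : forall x, phi (prod_perm h x) = phi x.
  by move=> x; rewrite /phi prod_permE !ffunE !porbit_step.
apply: leq_trans (inv_count inv).
rewrite -!cardsX; apply: subset_leq_card; apply/subsetP => [[A B]].
rewrite !inE /= => /andP[/imsetP[a _ ->] /imsetP[b _ ->]].
apply/imsetP; exists [ffun m => if m == i then a else b]; first by rewrite inE.
by rewrite /phi !ffunE eqxx eq_sym (negbTE nij).
Qed.

Lemma famS_disj l (T : finType) (F F' : 'I_l -> {set T}) k :
  [disjoint F k & F' k] -> [disjoint famS F & famS F'].
Proof.
rewrite -!setI_eq0 => /eqP D; apply/eqP/setP => x; rewrite !inE.
apply/negP => /andP[/forallP H1 /forallP H2].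
have : x k \in F k :&: F' k by rewrite inE H1 H2.
by rewrite D inE.
Qed.

Lemma fam_sum l (T : finType) (h : 'I_l -> {perm T}) (Fs : seq {ffun 'I_l -> {set T}}) :
  all (fun F : {ffun 'I_l -> {set T}} => [forall k, F k \in porbits (h k)]) Fs ->
  pairwise (fun F F' : {ffun 'I_l -> {set T}} => [exists k, [disjoint F k & F' k]]) Fs ->
  \sum_(F <- Fs) #|[set porbit (prod_perm h) x | x in famS F]| <= #|porbits (prod_perm h)|.
Proof.
move=> Hall Hpw.
have := @orbits_sum _ (prod_perm h) [seq famS (fun_of_fin F) | F <- Fs].
rewrite big_map; apply.
  move=> S /mapP[F FFs ->]; apply: famS_inv => k.
  by have := allP Hall F FFs => /forallP.
rewrite pairwise_map; apply: sub_pairwise Hpw => F F' /existsP[k Hk].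
exact: famS_disj Hk.
Qed.

Lemma orbits_in_le (X : finType) (g : {perm X}) (S : {set X}) :
  #|[set porbit g x | x in S]| <= #|porbits g|.
Proof. by apply: subset_leq_card; apply/subsetP => _ /imsetP[x _ ->]; apply: imset_f. Qed.

Lemma ord2_other (i j k : 'I_2) : i != j -> k != i -> k = j.
Proof.
by move: i j k => [[|[|?]] ?] [[|[|?]] ?] [[|[|?]] ?] //= _ _; apply: val_inj.
Qed.

Lemma setT_porbits (T : finType) (s : {perm T}) :
  #|porbits s| = 1 -> [set: T] \in porbits s.
Proof. by move/porbits_setT => E; rewrite -mem_enum E inE. Qed.

Lemma two_ones l (T : finType) (h : 'I_l -> {perm T}) i j (x0 : T) :
  i != j -> #|porbits (h i)| = 1 -> #|porbits (h j)| = 1 ->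
  #|T| <= #|porbits (prod_perm h)|.
Proof.
move=> nij ci cj.
pose F k := if (k == i) || (k == j) then [set: T] else porbit (h k) x0.
have HF k : F k \in porbits (h k).
  rewrite /F; case: (eqVneq k i) => [->|_]; first by rewrite setT_porbits.
  case: (eqVneq k j) => [->|_]; first by rewrite setT_porbits.
  exact: imset_f.
apply: leq_trans (orbits_in_le _ (famS F)).
have := famS_gcd nij HF; rewrite /F eqxx (eq_sym j) (negbTE nij) eqxx orbT /=.
by rewrite cardsT gcdnn.
Qed.

Lemma gcd_suml a b : gcdn (a + b) a = gcdn a b.
Proof. by rewrite gcdnC gcdnDl. Qed.

Lemma gcd_sumr a b : gcdn (a + b) b = gcdn a b.
Proof. by rewrite gcdnC gcdnDr gcdnC. Qed.

Lemma sum_bound2 (T : finType) (h : 'I_2 -> {perm T}) i j :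
  i != j -> #|porbits (h i)| = 1 ->
  \sum_(B <- enum (porbits (h j))) gcdn #|T| #|B| <= #|porbits (prod_perm h)|.
Proof.
move=> nij ci.
pose FB (B : {set T}) := [ffun k => if k == i then [set: T] else B].
have := @fam_sum 2 T h [seq FB B | B <- enum (porbits (h j))].
rewrite big_map => H; apply: leq_trans (H _ _); last first.
- rewrite pairwise_map.
  have := enum_uniq (porbits (h j)); rewrite uniq_pairwise.
  apply: (sub_in_pairwise (P := mem (enum (porbits (h j))))); last first.
    by apply/allP.
  move=> B B'; rewrite !mem_enum => HB HB' /= nBB'.
  apply/existsP; exists j; rewrite !ffunE eq_sym (negbTE nij).
  exact: (porbits_disj HB HB' nBB').
- apply/allP => _ /mapP[B HB ->]; apply/forallP => k; rewrite ffunE.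
  case: (eqVneq k i) => [->|ki]; first by rewrite setT_porbits.
  by rewrite (ord2_other nij ki) -mem_enum.
rewrite big_seq_cond [X in _ <= X]big_seq_cond; apply: leq_sum => B.
rewrite andbT => HB.
have HF : forall k, FB B k \in porbits (h k).
  move=> k; rewrite ffunE.
  case: (eqVneq k i) => [->|ki]; first by rewrite setT_porbits.
  by rewrite (ord2_other nij ki) -mem_enum.
by have := famS_gcd nij HF; rewrite !ffunE eqxx eq_sym (negbTE nij) cardsT.
Qed.

Lemma case_one2 (T : finType) (h : 'I_2 -> {perm T}) i j :
  i != j -> 5 <= #|T| -> #|porbits (prod_perm h)| <= 4 ->
  #|porbits (h i)| = 1 -> prop53_conclusion h.
Proof.
move=> nij r5 N4 ci.
have [x0 _] : exists x0 : T, true.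
  by case: (pickP (@predT T)) => [x _|e]; [exists x | move: r5; rewrite cardE enumT; case: (Finite.enum T) e => //= x _ /(_ x)].
have cj1 : #|porbits (h j)| != 1.
  apply/eqP => cj; have := two_ones x0 nij ci cj; move: r5 N4; lia.
have cj4 : #|porbits (h j)| <= 4.
  by have := proj2 h nij; rewrite ci mul1n => /leq_trans; apply.
have Hsum := leq_trans (sum_bound2 nij ci) N4.
have Hr := porbits_sum (h j).
have Hsz : size (enum (porbits (h j))) = #|porbits (h j)| by rewrite -cardE.
have Hpos B : B \in enum (porbits (h j)) -> 0 < #|B|.
  by rewrite mem_enum; apply: porbits_gt0.
have li : cyc_lens (h i) = [:: #|T|] by rewrite /cyc_lens porbits_setT //= cardsT.
have r0 : 0 < #|T| by move: r5; lia.
move: Hsum Hr Hsz Hpos; case E: (enum (porbits (h j))) => [|B1 [|B2 [|B3 [|B4 [|B5 s]]]]];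
  rewrite ?big_cons ?big_nil /= => Hsum Hr Hsz Hpos.
- exfalso; by rewrite -Hr in r5.
- exfalso; by rewrite -Hsz in cj1.
-
  right; left; split => //; exists i, j; split => //; exists #|B1|; split => //.
    by rewrite /cyc_lens E /= -Hr addn0 addKn.
  move: Hsum; rewrite -Hr addn0 gcd_suml gcd_sumr; lia.
-
  right; right; left; split => //; exists i, j; split => //.
  exists #|B1|, #|B2|; split => //.
    by rewrite /cyc_lens E /= -Hr addn0 addnA addKn.
  have e : gcdn #|T| (#|B1| + #|B2|) = gcdn #|T| #|B3|.
    by rewrite -Hr addn0 addnA gcd_suml gcd_sumr.
  by rewrite e; move: Hsum; rewrite addn0 !addnA.
-
  have g1 : 0 < gcdn #|T| #|B1| by rewrite gcdn_gt0 r0.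
  have g2 : 0 < gcdn #|T| #|B2| by rewrite gcdn_gt0 r0.
  have g3 : 0 < gcdn #|T| #|B3| by rewrite gcdn_gt0 r0.
  have g4 : 0 < gcdn #|T| #|B4| by rewrite gcdn_gt0 r0.
  have e : gcdn #|T| (#|B1| + #|B2| + #|B3|) = gcdn #|T| #|B4|.
    by rewrite -Hr addn0 !addnA gcd_suml gcd_sumr.
  right; right; right; right; split => //; exists i, j; split => //.
  exists #|B1|, #|B2|, #|B3|; split => //.
    by rewrite /cyc_lens E /= -Hr addn0 !addnA addKn.
  rewrite e; move: Hsum g1 g2 g3 g4; rewrite addn0.
  move: (gcdn #|T| #|B1|) (gcdn #|T| #|B2|) (gcdn #|T| #|B3|) (gcdn #|T| #|B4|) => a b c d.
  move=> *; split; lia.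
- exfalso; by rewrite -Hsz in cj4.
Qed.

Lemma enum2 (T : finType) (s : {perm T}) : #|porbits s| = 2 ->
  exists A1 A2, [/\ enum (porbits s) = [:: A1; A2], A1 \in porbits s,
     A2 \in porbits s, A1 != A2 & #|A1| + #|A2| = #|T|].
Proof.
move=> c2; have Hr := porbits_sum s; have U := enum_uniq (porbits s).
have : size (enum (porbits s)) = 2 by rewrite -cardE.
move: Hr U; case E: (enum (porbits s)) => [|A1 [|A2 [|]]] //=.
move=> Hr U _; move: Hr; rewrite big_cons big_cons big_nil addn0 => Hr.
have nA : A1 != A2 by move: U; rewrite andbT inE.
have m1 : A1 \in [:: A1; A2] by rewrite inE eqxx.
have m2 : A2 \in [:: A1; A2] by rewrite !inE eqxx orbT.
rewrite -E mem_enum in m1; rewrite -E mem_enum in m2.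
by exists A1, A2; split.
Qed.

Definition FF2 (T : finType) (i : 'I_2) (A B : {set T}) : {ffun 'I_2 -> {set T}} :=
  [ffun k => if k == i then A else B].

Lemma FF2E (T : finType) (i : 'I_2) (A B : {set T}) k :
  FF2 i A B k = if k == i then A else B.
Proof. by rewrite /FF2 ffunE. Qed.

Lemma FF2_porbits (T : finType) (h : 'I_2 -> {perm T}) i j A B :
  i != j -> A \in porbits (h i) -> B \in porbits (h j) ->
  forall k, FF2 i A B k \in porbits (h k).
Proof.
move=> nij HA HB k; rewrite FF2E; case: (eqVneq k i) => [->|ki] //.
by rewrite (ord2_other nij ki).
Qed.

Lemma FF2_gcd (T : finType) (h : 'I_2 -> {perm T}) i j A B :
  i != j -> A \in porbits (h i) -> B \in porbits (h j) ->
  gcdn #|A| #|B| <= #|[set porbit (prod_perm h) x | x in famS (FF2 i A B)]|.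
Proof.
move=> nij HA HB; have := famS_gcd nij (FF2_porbits nij HA HB).
by rewrite !FF2E eqxx eq_sym (negbTE nij).
Qed.

Lemma four_ones a b c d oa ob oc od :
  a <= oa -> b <= ob -> c <= oc -> d <= od -> 0 < a -> 0 < b -> 0 < c -> 0 < d ->
  oa + (ob + (oc + od)) <= 4 -> [/\ a = 1, b = 1, c = 1 & d = 1].
Proof. move=> *; split; lia. Qed.

Lemma case_22 (T : finType) (h : 'I_2 -> {perm T}) i j :
  i != j -> #|porbits (prod_perm h)| <= 4 ->
  #|porbits (h i)| = 2 -> #|porbits (h j)| = 2 -> prop53_conclusion h.
Proof.
move=> nij N4 ci cj.
have [A1 [A2 [EA HA1 HA2 nA HA]]] := enum2 ci.
have [B1 [B2 [EB HB1 HB2 nB HB]]] := enum2 cj.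
have HS := @fam_sum 2 T h [:: FF2 i A1 B1; FF2 i A1 B2; FF2 i A2 B1; FF2 i A2 B2].
have dA : [disjoint A1 & A2] := porbits_disj HA1 HA2 nA.
have dB : [disjoint B1 & B2] := porbits_disj HB1 HB2 nB.
have dA' : [disjoint A2 & A1] by rewrite disjoint_sym.
have dB' : [disjoint B2 & B1] by rewrite disjoint_sym.
have Hj : forall A B : {set T}, FF2 i A B j = B by move=> A B; rewrite FF2E eq_sym (negbTE nij).
have Hi : forall A B : {set T}, FF2 i A B i = A by move=> A B; rewrite FF2E eqxx.
have dj : forall A A' B B' : {set T}, [disjoint B & B'] ->
    [exists k, [disjoint FF2 i A B k & FF2 i A' B' k]].
  by move=> A A' B B' D; apply/existsP; exists j; rewrite !Hj.
have di : forall A A' B B' : {set T}, [disjoint A & A'] ->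
    [exists k, [disjoint FF2 i A B k & FF2 i A' B' k]].
  by move=> A A' B B' D; apply/existsP; exists i; rewrite !Hi.
have Hall : all (fun F : {ffun 'I_2 -> {set T}} => [forall k, F k \in porbits (h k)])
      [:: FF2 i A1 B1; FF2 i A1 B2; FF2 i A2 B1; FF2 i A2 B2].
  rewrite /= !andbT; apply/and4P; split; apply/forallP; exact: (FF2_porbits nij).
have Hpw : pairwise
      (fun F F' : {ffun 'I_2 -> {set T}} => [exists k, [disjoint F k & F' k]])
      [:: FF2 i A1 B1; FF2 i A1 B2; FF2 i A2 B1; FF2 i A2 B2].
  rewrite /= !andbT; repeat (apply/andP; split).
  - exact: dj dB.
  - exact: di dA.
  - exact: di dA.
  - exact: di dA.
  - exact: di dA.
  - exact: dj dB.
have HS' := HS Hall Hpw.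
clear HS; rewrite !big_cons big_nil addn0 in HS'.
have g11 := FF2_gcd nij HA1 HB1; have g12 := FF2_gcd nij HA1 HB2.
have g21 := FF2_gcd nij HA2 HB1; have g22 := FF2_gcd nij HA2 HB2.
have p1 := porbits_gt0 HA1; have p2 := porbits_gt0 HA2.
have q11 : 0 < gcdn #|A1| #|B1| by rewrite gcdn_gt0 p1.
have q12 : 0 < gcdn #|A1| #|B2| by rewrite gcdn_gt0 p1.
have q21 : 0 < gcdn #|A2| #|B1| by rewrite gcdn_gt0 p2.
have q22 : 0 < gcdn #|A2| #|B2| by rewrite gcdn_gt0 p2.
have N := leq_trans HS' N4; clear HS'.
have [e11 e12 e21 e22] := four_ones g11 g12 g21 g22 q11 q12 q21 q22 N.
left; split => //; exists i, j; split => //; exists #|A1|, #|B1|.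
have f1 : #|T| - #|A1| = #|A2| by rewrite -HA addKn.
have f2 : #|T| - #|B1| = #|B2| by rewrite -HB addKn.
rewrite f1 f2 /coprime /cyc_lens EA EB e11 e12 e21 e22.
by split.
Qed.

Lemma ord3_other (i j k m : 'I_3) : i != j -> j != k -> i != k ->
  m != i -> m != j -> m = k.
Proof.
by move: i j k m => [[|[|[|?]]] ?] [[|[|[|?]]] ?] [[|[|[|?]]] ?] [[|[|[|?]]] ?] //= *;
  apply: val_inj.
Qed.

Definition FF3 (T : finType) (i j : 'I_3) (B C : {set T}) : {ffun 'I_3 -> {set T}} :=
  [ffun m => if m == i then [set: T] else if m == j then B else C].

Lemma FF3E (T : finType) (i j : 'I_3) (B C : {set T}) m :
  FF3 i j B C m = if m == i then [set: T] else if m == j then B else C.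
Proof. by rewrite /FF3 ffunE. Qed.

Lemma case_122 (T : finType) (h : 'I_3 -> {perm T}) i j k :
  i != j -> j != k -> i != k -> #|porbits (prod_perm h)| <= 4 ->
  #|porbits (h i)| = 1 -> #|porbits (h j)| = 2 -> #|porbits (h k)| = 2 ->
  prop53_conclusion h.
Proof.
move=> nij njk nik N4 ci cj ck.
have [B1 [B2 [EB HB1 HB2 nB HB]]] := enum2 cj.
have [C1 [C2 [EC HC1 HC2 nC HC]]] := enum2 ck.
have Fi : forall B C : {set T}, FF3 i j B C i = [set: T] by move=> B C; rewrite FF3E eqxx.
have Fj : forall B C : {set T}, FF3 i j B C j = B.
  by move=> B C; rewrite FF3E eq_sym (negbTE nij) eqxx.
have Fk : forall B C : {set T}, FF3 i j B C k = C.
  by move=> B C; rewrite FF3E eq_sym (negbTE nik) eq_sym (negbTE njk).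
have Fp : forall B C, B \in porbits (h j) -> C \in porbits (h k) ->
    forall m, FF3 i j B C m \in porbits (h m).
  move=> B C HB' HC' m; rewrite FF3E.
  case: (eqVneq m i) => [->|mi]; first by rewrite setT_porbits.
  case: (eqVneq m j) => [->|mj] //.
  by rewrite (ord3_other nij njk nik mi mj).
have dj : forall B B' C C' : {set T}, [disjoint B & B'] ->
    [exists m, [disjoint FF3 i j B C m & FF3 i j B' C' m]].
  by move=> B B' C C' D; apply/existsP; exists j; rewrite !Fj.
have dk : forall B B' C C' : {set T}, [disjoint C & C'] ->
    [exists m, [disjoint FF3 i j B C m & FF3 i j B' C' m]].
  by move=> B B' C C' D; apply/existsP; exists k; rewrite !Fk.
have dB : [disjoint B1 & B2] := porbits_disj HB1 HB2 nB.
have dC : [disjoint C1 & C2] := porbits_disj HC1 HC2 nC.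
have HS := @fam_sum 3 T h [:: FF3 i j B1 C1; FF3 i j B1 C2; FF3 i j B2 C1; FF3 i j B2 C2].
have Hall : all (fun F : {ffun 'I_3 -> {set T}} => [forall m, F m \in porbits (h m)])
      [:: FF3 i j B1 C1; FF3 i j B1 C2; FF3 i j B2 C1; FF3 i j B2 C2].
  rewrite /= !andbT; apply/and4P; split; apply/forallP; exact: Fp.
have Hpw : pairwise
      (fun F F' : {ffun 'I_3 -> {set T}} => [exists m, [disjoint F m & F' m]])
      [:: FF3 i j B1 C1; FF3 i j B1 C2; FF3 i j B2 C1; FF3 i j B2 C2].
  rewrite /= !andbT; repeat (apply/andP; split).
  - exact: dk dC.
  - exact: dj dB.
  - exact: dj dB.
  - exact: dj dB.
  - exact: dj dB.
  - exact: dk dC.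
have HS' := HS Hall Hpw.
clear HS; rewrite !big_cons big_nil addn0 in HS'.
have N := leq_trans HS' N4; clear HS'.
pose o B C := #|[set porbit (prod_perm h) x | x in famS (FF3 i j B C)]|.
have gij B C (HB' : B \in porbits (h j)) (HC' : C \in porbits (h k)) :
    gcdn #|T| #|B| <= o B C.
  by have := famS_gcd nij (Fp _ _ HB' HC'); rewrite Fi Fj cardsT.
have gik B C (HB' : B \in porbits (h j)) (HC' : C \in porbits (h k)) :
    gcdn #|T| #|C| <= o B C.
  by have := famS_gcd nik (Fp _ _ HB' HC'); rewrite Fi Fk cardsT.
have gjk B C (HB' : B \in porbits (h j)) (HC' : C \in porbits (h k)) :
    gcdn #|B| #|C| <= o B C.
  by have := famS_gcd njk (Fp _ _ HB' HC'); rewrite Fj Fk.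
have r0 : 0 < #|T| by rewrite -HB addn_gt0 (porbits_gt0 HB1).
have pos B C (HB' : B \in porbits (h j)) (HC' : C \in porbits (h k)) : 0 < o B C.
  by apply: leq_trans (gij B C HB' HC'); rewrite gcdn_gt0 r0.
have [e11 e12 e21 e22] := four_ones (leqnn (o B1 C1)) (leqnn (o B1 C2))
   (leqnn (o B2 C1)) (leqnn (o B2 C2)) (pos _ _ HB1 HC1) (pos _ _ HB1 HC2)
   (pos _ _ HB2 HC1) (pos _ _ HB2 HC2) N.
have one a B C (HB' : B \in porbits (h j)) (HC' : C \in porbits (h k)) :
   o B C = 1 -> 0 < a -> a <= o B C -> a = 1.
  by move=> -> a0 a1; apply/eqP; rewrite eqn_leq a1 a0.
have pb1 := porbits_gt0 HB1; have pb2 := porbits_gt0 HB2.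
have rb1 : gcdn #|T| #|B1| = 1 by apply: (one _ B1 C1) => //; [rewrite gcdn_gt0 r0 | exact: gij].
have rb2 : gcdn #|T| #|B2| = 1 by apply: (one _ B2 C1) => //; [rewrite gcdn_gt0 r0 | exact: gij].
have rc1 : gcdn #|T| #|C1| = 1 by apply: (one _ B1 C1) => //; [rewrite gcdn_gt0 r0 | exact: gik].
have rc2 : gcdn #|T| #|C2| = 1 by apply: (one _ B1 C2) => //; [rewrite gcdn_gt0 r0 | exact: gik].
have b1c1 : gcdn #|B1| #|C1| = 1 by apply: (one _ B1 C1) => //; [rewrite gcdn_gt0 pb1 | exact: gjk].
have b1c2 : gcdn #|B1| #|C2| = 1 by apply: (one _ B1 C2) => //; [rewrite gcdn_gt0 pb1 | exact: gjk].
have b2c1 : gcdn #|B2| #|C1| = 1 by apply: (one _ B2 C1) => //; [rewrite gcdn_gt0 pb2 | exact: gjk].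
have b2c2 : gcdn #|B2| #|C2| = 1 by apply: (one _ B2 C2) => //; [rewrite gcdn_gt0 pb2 | exact: gjk].
have b1b2 : gcdn #|B1| #|B2| = 1 by rewrite -gcd_suml HB.
have c1c2 : gcdn #|C1| #|C2| = 1 by rewrite -gcd_suml HC.
have f1 : #|T| - #|B1| = #|B2| by rewrite -HB addKn.
have f2 : #|T| - #|C1| = #|C2| by rewrite -HC addKn.
right; right; right; left; split => //; exists i, j, k; split => //.
exists #|B1|, #|C1|; rewrite f1 f2; split.
- by rewrite /cyc_lens porbits_setT //= cardsT.
- by rewrite /cyc_lens EB.
- by rewrite /cyc_lens EC.
by rewrite /= /coprime rb1 rb2 rc1 rc2 b1b2 b1c1 b1c2 b2c1 b2c2 c1c2.
Qed.

Lemma num4 a b c d : 0 < a -> 0 < b -> 0 < c -> 0 < d ->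
  a * b * c <= 4 -> a * b * d <= 4 -> a * c * d <= 4 -> b * c * d <= 4 ->
  ~ (a = 1 /\ b = 1) -> ~ (a = 1 /\ c = 1) -> ~ (a = 1 /\ d = 1) ->
  ~ (b = 1 /\ c = 1) -> ~ (b = 1 /\ d = 1) -> ~ (c = 1 /\ d = 1) -> False.
Proof. nia. Qed.

Lemma main_comb (T : finType) l (h : 'I_l -> {perm T}) :
  5 <= #|T| -> 2 <= l -> #|porbits (prod_perm h)| <= 4 -> prop53_conclusion h.
Proof.
move=> r5 l2 N4.
have [x0 _] : exists x0 : T, true.
  case: (pickP (@predT T)) => [x _|e]; first by exists x.
  by move: r5; rewrite cardE enumT; case: (Finite.enum T) e => //= x _ /(_ x).
have cpos k : 0 < #|porbits (h k)|.
  by rewrite card_gt0; apply/set0Pn; exists (porbit (h k) x0); apply: imset_f.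
have no2 i j : i != j -> ~ (#|porbits (h i)| = 1 /\ #|porbits (h j)| = 1).
  move=> nij [ci cj]; have := two_ones x0 nij ci cj; move: r5 N4; lia.
have p3 i j k : i != j -> j != k -> i != k ->
    #|porbits (h i)| * #|porbits (h j)| * #|porbits (h k)| <= 4.
  by move=> *; apply: leq_trans N4; apply: proj3.
have l3 : l <= 3.
  rewrite leqNgt; apply/negP => l4.
  have o0 : 0 < l by lia.
  have o1 : 1 < l by lia.
  have o2 : 2 < l by lia.
  pose i0 := Ordinal o0; pose i1 := Ordinal o1; pose i2 := Ordinal o2;
  pose i3 := Ordinal l4.
  have n01 : i0 != i1 by []. have n02 : i0 != i2 by []. have n03 : i0 != i3 by [].
  have n12 : i1 != i2 by []. have n13 : i1 != i3 by []. have n23 : i2 != i3 by [].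
  exact: (num4 (cpos i0) (cpos i1) (cpos i2) (cpos i3) (p3 _ _ _ n01 n12 n02)
    (p3 _ _ _ n01 n13 n03) (p3 _ _ _ n02 n23 n03) (p3 _ _ _ n12 n23 n13)
    (no2 _ _ n01) (no2 _ _ n02) (no2 _ _ n03) (no2 _ _ n12) (no2 _ _ n13) (no2 _ _ n23)).
case: l h l2 l3 cpos no2 p3 N4 => [|[|[|[|l]]]] h //= _ _ cpos no2 p3 N4.
- pose a := @Ordinal 2 0 isT; pose b := @Ordinal 2 1 isT.
  have nab : a != b by []. have nba : b != a by [].
  have pr := leq_trans (proj2 h nab) N4.
  have := no2 _ _ nab; have := cpos a; have := cpos b.
  case: (eqVneq #|porbits (h a)| 1) => [ca|ca]; first by move=> *; exact: case_one2 nab r5 N4 ca.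
  case: (eqVneq #|porbits (h b)| 1) => [cb|cb]; first by move=> *; exact: case_one2 nba r5 N4 cb.
  move=> p1 p2 _; have [e1 e2] : #|porbits (h a)| = 2 /\ #|porbits (h b)| = 2.
    move/eqP: ca; move/eqP: cb; move: pr p1 p2.
    move: #|porbits (h a)| #|porbits (h b)| => x y; nia.
  exact: case_22 nab N4 e1 e2.
- pose a := @Ordinal 3 0 isT; pose b := @Ordinal 3 1 isT; pose c := @Ordinal 3 2 isT.
  have nab : a != b by []. have nba : b != a by [].
  have nac : a != c by []. have nca : c != a by [].
  have nbc : b != c by []. have ncb : c != b by [].
  have pr := p3 _ _ _ nab nbc nac.
  have := no2 _ _ nab; have := no2 _ _ nac; have := no2 _ _ nbc.
  have := cpos a; have := cpos b; have := cpos c.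
  move: pr; move Eca: (#|porbits (h a)|) => ca.
  move Ecb: (#|porbits (h b)|) => cb.
  move Ecc: (#|porbits (h c)|) => cc.
  move=> pr pc pb pa Nbc Nac Nab.
  case: (eqVneq ca 1) => [e1|e1].
    have [e2 e3] : cb = 2 /\ cc = 2 by move: pr; rewrite e1 mul1n => pr; nia.
    apply: (case_122 nab nbc nac N4); congruence.
  case: (eqVneq cb 1) => [e2|e2].
    have [e1' e3] : ca = 2 /\ cc = 2 by move: pr; rewrite e2 muln1 => pr; nia.
    apply: (case_122 nba nac nbc N4); congruence.
  case: (eqVneq cc 1) => [e3|e3].
    have [e1' e2'] : ca = 2 /\ cb = 2 by move: pr; rewrite e3 muln1 => pr; nia.
    apply: (case_122 nca nab ncb N4); congruence.
  exfalso; move/eqP: e1; move/eqP: e2; move/eqP: e3; move: pr pa pb pc; nia.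
Qed.
Lemma bin_ge n k : 1 <= k -> k < n -> n <= 'C(n, k).
Proof.
elim: n k => [|n IH] k k1 kn; first by [].
case: k k1 kn => [|k] //= _ kn.
case: (ltngtP k.+1 n) => [lt|gt|E].
- rewrite binS; have h1 := IH k.+1 isT lt.
  have h2 : 0 < 'C(n, k) by rewrite bin_gt0; lia.
  lia.
- lia.
- by rewrite -E binSn.
Qed.

Lemma card_ksubset m k : 5 <= m -> 1 <= k -> k.*2 < m -> 5 <= #|ksubset m k|.
Proof.
move=> m5 k1 km.
rewrite /ksubset card_sig.
have -> : #|[pred A : {set 'I_m} | #|A| == k]| = #|[set A : {set 'I_m} | #|A| == k]|.
  by apply: eq_card => A; rewrite !inE.
rewrite card_draws card_ord; apply: leq_trans m5 (bin_ge _ _) => //; lia.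
Qed.

Local Close Scope group_scope.

Local Open Scope ring_scope.

Definition pgv (F : finFieldType) d (i0 i1 : 'I_d) (o : option F) : 'rV[F]_d :=
  \row_t (if t == i0 then (if o is Some _ then 1 else 0)
          else if t == i1 then (if o is Some a then a else 1) else 0).

Lemma pgv_nz (F : finFieldType) d (i0 i1 : 'I_d) (o : option F) : i0 != i1 -> pgv i0 i1 o != 0.
Proof.
move=> n01; apply/eqP => /rowP H.
case: o H => [a|] H.
  by have := H i0; rewrite !mxE eqxx => /eqP; rewrite oner_eq0.
by have := H i1; rewrite !mxE eq_sym (negbTE n01) eqxx => /eqP; rewrite oner_eq0.
Qed.

Lemma pgv_point (F : finFieldType) d (i0 i1 : 'I_d) (o : option F) (n01 : i0 != i1) :
  is_point [set a *: pgv i0 i1 o | a : F].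
Proof. by apply/existsP; exists (pgv i0 i1 o); rewrite pgv_nz // eqxx. Qed.

Definition pgp (F : finFieldType) d (i0 i1 : 'I_d) (n01 : i0 != i1) (o : option F)
  : pg_point F d := @exist _ (fun S : {set 'rV[F]_d} => is_point S) _ (pgv_point o n01).

Lemma pgp_inj (F : finFieldType) d (i0 i1 : 'I_d) (n01 : i0 != i1) :
  injective (@pgp F d i0 i1 n01).
Proof.
move=> o o' /(congr1 sval) /= E.
have : pgv i0 i1 o' \in [set a *: pgv i0 i1 o | a : F].
  by rewrite E; apply/imsetP; exists 1; rewrite ?inE ?scale1r.
case/imsetP => c _ /rowP H.
have H0 := H i0; have H1 := H i1.
rewrite !mxE eqxx eq_sym (negbTE n01) eqxx in H0 H1.
clear E H; case: o o' H0 H1 => [a|] [b|] //= H0 H1.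
- by rewrite mulr1 in H0; rewrite H1 -H0 mul1r.
- by move: H0; rewrite mulr1 => H0; move: H1; rewrite -H0 mul0r => /eqP; rewrite oner_eq0.
- by move: H0; rewrite mulr0 => /eqP; rewrite oner_eq0.
Qed.



Lemma card_pg (F : finFieldType) d : (2 <= d)%N -> (#|F|.+1 <= #|pg_point F d|)%N.
Proof.
move=> d2.
have o0 : (0 < d)%N by lia.
have o1 : (1 < d)%N by lia.
have n01 : Ordinal o0 != Ordinal o1 by [].
rewrite -card_option; exact: leq_card (@pgp_inj F d _ _ n01).
Qed.

Local Close Scope ring_scope.

Theorem proposition5p3 :
  (forall (m k l : nat) (h : 'I_l -> {perm ksubset m k}),
     5 <= m -> 1 <= k -> k.*2 < m -> 2 <= l ->
     (forall i, in_Sym_ksub (h i)) ->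
     ncycles (prod_perm h) <= 4 ->
     prop53_conclusion h)
  /\
  (forall (q d l : nat) (F : finFieldType) (h : 'I_l -> {perm pg_point F d}),
     #|F| = q -> 4 <= q -> 2 <= d -> 2 <= l ->
     (forall i, in_PGammaL (h i)) ->
     ncycles (prod_perm h) <= 4 ->
     prop53_conclusion h).
Proof.
split.
- move=> m k l h m5 k1 km l2 _ N; apply: main_comb => //; exact: card_ksubset.
- move=> q d l F h Fq q4 d2 l2 _ N; apply: main_comb => //.
  have := card_pg F d2; move: Fq q4; lia.
Qed.
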